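(* The formal power series $\mathcal{E}_1(x)=\sum_{n=1}^{\infty}e(n)x^n\in\mathbb{Z}[[x]]$ satisfies $$\mathcal{E}_1(x)=\mathcal{E}_1(x^2)+\frac{x^2+1}{x}\,\mathcal{E}_1(x^4)+\frac{x^2}{1-x}.$$
   Context: The Stern polynomials $B_n(t)\in\mathbb{Z}[t]$ are defined by $B_0(t)=0$, $B_1(t)=1$, and for $n\geq 1$: $B_{2n}(t)=tB_n(t)$, $B_{2n+1}(t)=B_n(t)+B_{n+1}(t)$. For $n\geq1$ let $e(n)=\deg B_n(t)$. *)

(* Defs.v *)
From HB Require Import structures.
From mathcomp Require Import all_boot all_order all_algebra.
Set Implicit Arguments. Unset Strict Implicit. Unset Printing Implicit Defensive.
Import GRing.Theory Num.Theory.
Local Open Scope ring_scope.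

(* Stern polynomials B_n(t) in Z[t], computed with fuel (fuel n suffices). *)
Fixpoint sternF (fuel n : nat) : {poly int} :=
  match fuel with
  | 0 => 0
  | f.+1 =>
    if n is 0 then 0 else
    if n == 1%N then 1 else
    if odd n then sternF f n./2 + sternF f (n./2).+1
    else 'X * sternF f n./2
  end.

Definition stern (n : nat) : {poly int} := sternF n.+1 n.

Definition e (n : nat) : nat := (size (stern n)).-1.

Definition fps := nat -> int.

Definition fps_add (f g : fps) : fps := fun n => f n + g n.
Definition fps_mul (f g : fps) : fps :=
  fun n => \sum_(i < n.+1) f i * g (n - i)%N.
(* f(x^k), k > 0 *)
Definition fps_subst_pow (k : nat) (f : fps) : fps :=
  fun n => if (k %| n)%N then f (n %/ k)%N else 0.
(* f / x, meaningful when f has zero constant term *)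
Definition fps_divX (f : fps) : fps := fun n => f n.+1.
Definition fps_X2p1 : fps := fun n => ((n == 0%N) || (n == 2%N))%:R.
Definition fps_X2 : fps := fun n => (n == 2%N)%:R.
Definition fps_1mX : fps := fun n => (n == 0%N)%:R - (n == 1%N)%:R.
Definition fps_inv1mX : fps := fun _ => 1.
Definition fps_one : fps := fun n => (n == 0%N)%:R.

Definition E1 : fps := fun n => if n is 0 then 0 else (e n)%:Z.

Lemma fps_inv1mX_spec n : fps_mul fps_1mX fps_inv1mX n = fps_one n.
Proof.
rewrite /fps_mul /fps_1mX /fps_inv1mX /fps_one.
case: n => [|n]; first by rewrite big_ord_recl big_ord0 /= mulr1 subr0 addr0.
rewrite !big_ord_recl /= big1 => [|i _]; first by rewrite !mulr1 sub0r subr0 addr0 addrN.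
by rewrite /bump /= subrr mul0r.
Qed.

(* Main.v *)
Require Import Defs.
From mathcomp Require Import all_boot all_order all_algebra.
From Stdlib Require Import Lia.
Import GRing.Theory Num.Theory Order.TTheory.
Local Open Scope ring_scope.


Lemma sternF_fuel f g n : (n < f)%N -> (n < g)%N -> sternF f n = sternF g n.
Proof.
elim: f g n => [|f IH] [|g] n //= hf hg.
case: n hf hg => [|n] //= hf hg.
case: ifP => // n1.
rewrite uphalf_half.
have := odd_double_half n; rewrite -muln2 -multE -plusE.
move/ssrnat.ltP: hf; move/ssrnat.ltP: hg; move/negbT/eqP: n1 => n1 hg hf.
case: (odd n) => /= hn.
- by rewrite (IH g) //; apply/ssrnat.ltP; rewrite -?plusE; lia.
- by rewrite !(IH g) //; apply/ssrnat.ltP; rewrite -?plusE; lia.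
Qed.

Lemma stern_fuel f n : (n < f)%N -> sternF f n = stern n.
Proof. by move=> h; apply: sternF_fuel. Qed.

Lemma sternF_S f n : sternF f.+1 n =
  if n is 0 then 0 else if n == 1%N then 1 else
  if odd n then sternF f n./2 + sternF f (n./2).+1 else 'X * sternF f n./2.
Proof. by []. Qed.

Lemma stern_even m : (0 < m)%N -> stern m.*2 = 'X * stern m.
Proof.
move=> m0; rewrite /stern sternF_S.
case: m m0 => // m _.
have -> : (m.+1.*2 == 1%N) = false by rewrite doubleS.
rewrite odd_double doubleK stern_fuel //.
by rewrite -addnn addnS ltnS leq_addr.
Qed.

Lemma stern_odd m : (0 < m)%N -> stern m.*2.+1 = stern m + stern m.+1.
Proof.
move=> m0; rewrite /stern sternF_S.
case: m m0 => // m _.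
have -> : (m.+1.*2.+1 == 1%N) = false by rewrite doubleS.
have -> : m.+1.*2.+1./2 = m.+1 by rewrite /= uphalf_double.
rewrite oddS odd_double !stern_fuel //.
  by apply/ssrnat.ltP; rewrite -addnn -?plusE; lia.
by apply/ssrnat.ltP; rewrite -addnn -?plusE; lia.
Qed.

Definition nnp (p : {poly int}) := forall i, 0 <= p`_i.

Lemma size_addnn_le p q : nnp p -> nnp q -> (size q <= size p)%N ->
  size (p + q) = size p.
Proof.
move=> hp hq le.
apply/anti_leq; rewrite (leq_trans (size_polyD _ _)) ?(maxn_idPl le) //=.
case: (eqVneq p 0) => [->|pn0]; first by rewrite size_poly0.
rewrite leqNgt; apply/negP => lt.
have p0 : (0 < size p)%N by exact: leq_ltn_trans (leq0n _) lt.
have h' : (size (p + q)%R <= (size p).-1)%N by rewrite -ltnS prednK.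
have := leq_sizeP _ _ h' _ (leqnn _).
rewrite coefD => /eqP; rewrite paddr_eq0 // => /andP [/eqP h _].
by move: pn0; rewrite -lead_coef_eq0 /lead_coef h eqxx.
Qed.

Lemma size_addnn p q : nnp p -> nnp q -> size (p + q) = maxn (size p) (size q).
Proof.
move=> hp hq; case: (leqP (size q) (size p)) => h.
  by rewrite size_addnn_le // (maxn_idPl h).
by rewrite addrC size_addnn_le // ?(maxn_idPr (ltnW h)) // ltnW.
Qed.

Lemma nnpD p q : nnp p -> nnp q -> nnp (p + q).
Proof. by move=> hp hq i; rewrite coefD addr_ge0. Qed.

Lemma nnpX p : nnp p -> nnp ('X * p).
Proof. by move=> hp [|i]; rewrite coefXM //=. Qed.

Lemma n_cases n : n = 0%N \/ n = 1%N \/ exists2 m, (0 < m)%N & (n = m.*2 \/ n = m.*2.+1).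
Proof.
have := odd_double_half n; case: (odd n) => /= h.
- case: (posnP n./2) => [h0|hp]; first by right; left; rewrite -h h0.
  by right; right; exists n./2; [done | right; rewrite -[in LHS]h].
- case: (posnP n./2) => [h0|hp]; first by left; rewrite -h h0.
  by right; right; exists n./2; [done | left; rewrite -[in LHS]h add0n].
Qed.

Lemma stern_nn n : nnp (stern n) /\ (0 < n -> 0 < size (stern n))%N.
Proof.
elim/ltn_ind: n => n IH.
case: (n_cases n) => [h|[h|[m m0 [h|h]]]]; subst n.
- by split => // i; rewrite /stern /= coef0.
- by split => [i|_]; rewrite /stern /= ?size_poly1 // coef1; case: (i == 0%N).
- have lt : (m < m.*2)%N by rewrite -addnn -{1}[m]addn0 ltn_add2l.
  case: (IH m lt) => h1 h2; rewrite stern_even //; split; first exact: nnpX.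
  by move=> _; rewrite mulrC size_mulX ?ltnS // -size_poly_gt0 h2.
- have lt : (m < m.*2.+1)%N by rewrite ltnS -addnn leq_addr.
  have lt2 : (m.+1 < m.*2.+1)%N by rewrite ltnS -addnn -addn1 leq_add2l.
  case: (IH m lt) => h1 h2; case: (IH _ lt2) => h3 h4.
  rewrite stern_odd //; split; first exact: nnpD.
  by move=> _; rewrite size_addnn // leq_max h2.
Qed.

Definition s n := size (stern n).

Lemma s_even m : (0 < m)%N -> s m.*2 = (s m).+1.
Proof.
move=> m0; rewrite /s stern_even // mulrC size_mulX // -size_poly_gt0.
by case: (stern_nn m) => _ ->.
Qed.

Lemma s_odd m : (0 < m)%N -> s m.*2.+1 = maxn (s m) (s m.+1).
Proof.
move=> m0; rewrite /s stern_odd // size_addnn //; [exact: (stern_nn m).1 | exact: (stern_nn m.+1).1].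
Qed.

Lemma s1 : s 1 = 1%N. Proof. by rewrite /s /stern /= size_poly1. Qed.
Lemma s2 : s 2 = 2%N. Proof. by rewrite (@s_even 1) // s1. Qed.

Lemma s_diff n : (0 < n)%N -> (s n.+1 <= (s n).+1)%N /\ (s n <= (s n.+1).+1)%N.
Proof.
elim/ltn_ind: n => n IH n0.
case: (n_cases n) => [h|[h|[m m0 [h|h]]]]; subst n.
- by [].
- by rewrite s1 s2.
- have lt : (m < m.*2)%N by rewrite -addnn -{1}[m]addn0 ltn_add2l.
  case: (IH m lt m0) => h1 h2.
  rewrite s_odd // s_even //; split; last by rewrite ltnS leq_maxl.
  by rewrite geq_max (leq_trans h1 (leqnSn _)) leqW // leqnSn.
- have lt : (m < m.*2.+1)%N by rewrite ltnS -addnn leq_addr.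
  case: (IH m lt m0) => h1 h2.
  rewrite -doubleS s_odd // s_even //; split; first by rewrite ltnS leq_maxr.
  by rewrite geq_max (leqW h2) leqW // leqnSn.
Qed.

Lemma s_pos n : (0 < n)%N -> (0 < s n)%N.
Proof. exact: (stern_nn n).2. Qed.

Lemma s_4k1 k : (0 < k)%N -> s (k * 4 + 1) = (s k).+1.
Proof.
move=> k0.
have -> : (k * 4 + 1 = (k.*2).*2.+1)%N by rewrite -!muln2 -mulnA addn1.
rewrite s_odd ?double_gt0 // s_even // s_odd //.
have [h1 _] := s_diff _ k0.
by apply/maxn_idPl; rewrite geq_max leqnSn h1.
Qed.

Lemma s_4k3 k : s (k * 4 + 3) = (s k.+1).+1.
Proof.
have -> : (k * 4 + 3 = (k.*2.+1).*2.+1)%N by rewrite -!muln2 mulSn -mulnA addn3 add2n.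
rewrite s_odd // -doubleS s_even //.
apply/maxn_idPr.
case: (posnP k) => [->|k0]; first by rewrite s1.
by rewrite s_odd // geq_max (s_diff _ k0).2 leqW.
Qed.

Lemma e_eq n : (0 < n)%N -> e n = (s n).-1. Proof. by []. Qed.

Lemma conv1 (G : fps) n : fps_mul fps_X2p1 G n = G n + (if (1 < n)%N then G (n - 2)%N else 0).
Proof.
rewrite /fps_mul /fps_X2p1.
case: n => [|[|n]]; first by rewrite big_ord1 /= mul1r addr0.
  by rewrite !big_ord_recl big_ord0 /= mul1r mul0r !addr0.
rewrite !big_ord_recl /= !mul1r mul0r add0r.
rewrite big1 ?addr0; last by move=> i _; rewrite /bump /= mul0r.
by rewrite subn0 subn2.
Qed.

Lemma conv2 n : fps_mul fps_X2 fps_inv1mX n = ((1 < n)%N)%:R.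
Proof.
rewrite /fps_mul /fps_X2 /fps_inv1mX.
case: n => [|[|n]]; first by rewrite big_ord1 /= mul0r.
  by rewrite !big_ord_recl big_ord0 /= !mul0r !addr0.
rewrite !big_ord_recl /= !mul0r !add0r mul1r.
by rewrite big1 ?addr0 // => i _; rewrite /bump /= mul0r.
Qed.

Lemma dvd_mod d a r : (0 < d)%N -> (r < d)%N -> (d %| a * d + r)%N = (r == 0%N).
Proof. by move=> d0 rd; rewrite /dvdn modnMDl modn_small. Qed.

Lemma div_mod d a r : (0 < d)%N -> (r < d)%N -> ((a * d + r) %/ d = a)%N.
Proof. by move=> d0 rd; rewrite divnMDl // divn_small ?addn0. Qed.

Lemma E1pos n : (0 < n)%N -> E1 n = (e n)%:Z.
Proof. by case: n. Qed.

Lemma e_s n : (0 < n)%N -> e n = (s n).-1. Proof. by []. Qed.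

Lemma dvdE {x a d r} : x = (a * d + r)%N -> (0 < d)%N -> (r < d)%N -> (d %| x)%N = (r == 0%N).
Proof. by move=> -> d0 rd; rewrite dvd_mod. Qed.

Lemma divE {x a d r} : x = (a * d + r)%N -> (0 < d)%N -> (r < d)%N -> (x %/ d)%N = a.
Proof. by move=> -> d0 rd; rewrite div_mod. Qed.

Lemma toN (a b : nat) : a = b.+1 -> Posz a = (Posz b + (0 + 0) + 1)%R.
Proof. by move=> ->; rewrite !addr0 -PoszD addn1. Qed.

Lemma toN2 (a b : nat) : a = b.+1 -> Posz a = (0 + (0 + Posz b) + 1)%R.
Proof. by move=> ->; rewrite !add0r -PoszD addn1. Qed.

Lemma toN3 (a b : nat) : a = b.+1 -> Posz a = (0 + (Posz b + 0) + 1)%R.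
Proof. by move=> ->; rewrite add0r addr0 -PoszD addn1. Qed.

Ltac ar := rewrite -?plusE -?multE -?minusE; lia.

Lemma sE n : (0 < n)%N -> E1 n = ((s n).-1)%:Z.
Proof. by case: n. Qed.

Theorem mainTheorem17 : forall n : nat,
  E1 n =
  fps_add (fps_add (fps_subst_pow 2 E1)
                   (fps_mul fps_X2p1 (fps_divX (fps_subst_pow 4 E1))))
          (fps_mul fps_X2 fps_inv1mX) n.
Proof.
move=> n; rewrite /fps_add conv1 conv2 /fps_divX /fps_subst_pow.
rewrite (divn_eq n 4).
have : (n %% 4 < 4)%N by rewrite ltn_pmod.
move: (n %/ 4)%N (n %% 4)%N => k r.
case: r => [|[|[|[|r]]]] // _.
- case: k => [|k]; first by [].
  have e1 : (k.+1 * 4 + 0 = (k.+1 * 2) * 2 + 0)%N by ar.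
  have e2 : ((k.+1 * 4 + 0).+1 = k.+1 * 4 + 1)%N by ar.
  have e3 : ((k.+1 * 4 + 0 - 2).+1 = k * 4 + 3)%N by ar.
  have e4 : (1 < k.+1 * 4 + 0)%N by apply/ssrnat.ltP; ar.
  rewrite (dvdE e1) // (divE e1) // (dvdE e2) // (dvdE e3) // e4 /=.
  apply: toN.
  rewrite /e -!/(s _) e1 addn0 muln2 s_even ?muln_gt0 //= prednK //.
  by apply: s_pos; rewrite muln_gt0.
- case: k => [|k]; first by rewrite /= mul0n add0n /e -/(s 1) s1.
  have e1 : (k.+1 * 4 + 1 = (k.+1 * 2) * 2 + 1)%N by ar.
  have e2 : ((k.+1 * 4 + 1).+1 = k.+1 * 4 + 2)%N by ar.
  have e3 : ((k.+1 * 4 + 1 - 2).+1 = k.+1 * 4 + 0)%N by ar.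
  have e4 : (1 < k.+1 * 4 + 1)%N by apply/ssrnat.ltP; ar.
  rewrite (dvdE e1) // (dvdE e2) // (dvdE e3) // (divE e3) // e4 /=.
  apply: toN2.
  rewrite /e -!/(s _) s_4k1 //= prednK //; exact: s_pos.
- have e1 : (k * 4 + 2 = (k * 2).+1 * 2 + 0)%N by ar.
  have e2 : ((k * 4 + 2).+1 = k * 4 + 3)%N by ar.
  have e3 : ((k * 4 + 2 - 2).+1 = k * 4 + 1)%N by ar.
  have e4 : (1 < k * 4 + 2)%N by apply/ssrnat.ltP; ar.
  rewrite (dvdE e1) // (divE e1) // (dvdE e2) // (dvdE e3) // e4 /=.
  rewrite sE ?addn2 // -addn2; apply: toN.
  rewrite /e -!/(s _) e1 addn0 muln2 s_even //= prednK //; exact: s_pos.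
- have e1 : (k * 4 + 3 = (k * 2).+1 * 2 + 1)%N by ar.
  have e2 : ((k * 4 + 3).+1 = k.+1 * 4 + 0)%N by ar.
  have e3 : ((k * 4 + 3 - 2).+1 = k * 4 + 2)%N by ar.
  have e4 : (1 < k * 4 + 3)%N by apply/ssrnat.ltP; ar.
  rewrite (dvdE e1) // (dvdE e2) // (divE e2) // (dvdE e3) // e4 /=.
  rewrite sE ?addn3 // -addn3; apply: toN3.
  rewrite /e -!/(s _) s_4k3 //= prednK //; exact: s_pos.
Qed.
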